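(* Let $z \in \mathbb{R}$ with $|z| > 1$, and for $k \ge 0$ define \[ \mathrm{BF}_{01}(z; k) = \sqrt{1+k}\,\exp\left\{-\frac{z^2 k}{2(1+k)}\right\}. \] Then there exists a unique $k^* > 0$ such that $\mathrm{BF}_{01}(z; k^* ) = 1$. Moreover, $k^*$ satisfies \[ (1+k^* )\ln(1+k^* ) = z^2 k^*. \] Furthermore, for $0 < k < k^*$ one has $\mathrm{BF}_{01}(z; k) < 1$, and for $k > k^*$ one has $\mathrm{BF}_{01}(z; k) > 1$.
   Context: Setting: $X_1,\dots,X_n$ i.i.d. $\mathcal{N}(\mu,1)$, testing $H_0:\mu=0$ versus $H_1:\mu\neq 0$, with prior $\mu\mid H_1\sim\mathcal{N}(0,\tau^2)$, $\tau^2>0$. With $z=\sqrt{n}\,\bar x$ and $k = n\tau^2$, the Bayes factor in favour of $H_0$ is $\mathrm{BF}_{01}(z;k)$ as defined in the claim. The value $k^*$ is called the flip point; $\mathrm{BF}_{01}<1$ is interpreted as evidence for $H_1$ and $\mathrm{BF}_{01}>1$ as evidence for $H_0$. *)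

(* Defs.v *)
From Stdlib Require Import Reals.
Open Scope R_scope.

Definition BF01 (z k : R) : R :=
  sqrt (1 + k) * exp (- (z ^ 2 * k) / (2 * (1 + k))).

(* Main.v *)
Require Import Defs.
From Stdlib Require Import Reals Lra.
Open Scope R_scope.

Lemma ln_lt_xm1 x : 0 < x -> x <> 1 -> ln x < x - 1.
Proof.
  intros Hx H1. assert (ln x <> 0) by (apply ln_neq_0; auto).
  pose proof (exp_ineq1 _ H). rewrite exp_ln in H0; lra.
Qed.

Lemma ln_gt_1m x : 0 < x -> x <> 1 -> 1 - / x < ln x.
Proof.
  intros Hx H1. assert (0 < / x) by (apply Rinv_0_lt_compat; lra).
  assert (/ x <> 1). { intro E. apply H1. rewrite <- (Rinv_inv x), E. apply Rinv_1. }
  pose proof (ln_lt_xm1 _ H H0). rewrite ln_Rinv in H2; lra.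
Qed.

Section F.
Variable a : R.
Hypothesis ha : 1 < a.
Definition f t := ln t - a + a / t.

Lemma f_diff s t : 0 < s -> 0 < t ->
  f t - f s = ln (t / s) + a * (/ t - / s).
Proof.
  intros. unfold f, Rdiv. rewrite ln_mult, ln_Rinv; try lra.
  apply Rinv_0_lt_compat; lra.
Qed.

Lemma f_inc s t : a <= s -> s < t -> f s < f t.
Proof.
  intros.
  assert (0 < s) by lra. assert (0 < t) by lra.
  assert (0 < t / s) by (apply Rdiv_lt_0_compat; lra).
  assert (t / s <> 1). { intro E. apply (f_equal (fun u => u * s)) in E.
    unfold Rdiv in E. rewrite Rmult_assoc, Rinv_l, Rmult_1_r in E; lra. }
  pose proof (ln_gt_1m _ H3 H4).
  pose proof (f_diff s t H1 H2).
  assert (1 - / (t / s) + a * (/ t - / s) = (t - s) * (s - a) / (t * s)) by (field; lra).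
  assert (0 <= (t - s) * (s - a) / (t * s)).
  { unfold Rdiv. apply Rmult_le_pos. apply Rmult_le_pos; lra.
    left; apply Rinv_0_lt_compat, Rmult_lt_0_compat; lra. }
  lra.
Qed.

Lemma f_dec s t : 0 < s -> s < t -> t <= a -> f t < f s.
Proof.
  intros.
  assert (0 < t) by lra.
  assert (0 < t / s) by (apply Rdiv_lt_0_compat; lra).
  assert (t / s <> 1). { intro E. apply (f_equal (fun u => u * s)) in E.
    unfold Rdiv in E. rewrite Rmult_assoc, Rinv_l, Rmult_1_r in E; lra. }
  pose proof (ln_lt_xm1 _ H3 H4).
  pose proof (f_diff s t H H2).
  assert (t / s - 1 + a * (/ t - / s) = (t - s) * (t - a) / (t * s)) by (field; lra).
  assert ((t - s) * (t - a) / (t * s) <= 0).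
  { assert ((t - s) * (t - a) / (t * s) = - ((t - s) * (a - t) * / (t * s))) by (field; lra).
    assert (0 <= (t - s) * (a - t) * / (t * s)).
    { apply Rmult_le_pos. apply Rmult_le_pos; lra.
      left; apply Rinv_0_lt_compat, Rmult_lt_0_compat; lra. }
    lra. }
  lra.
Qed.

Lemma f1 : f 1 = 0.
Proof. unfold f. rewrite ln_1. field. Qed.

Lemma fa : f a < 0.
Proof.
  unfold f. pose proof (ln_lt_xm1 a ltac:(lra) ltac:(lra)).
  assert (a / a = 1) by (field; lra). lra.
Qed.

Lemma fea : 0 < f (exp a).
Proof.
  unfold f. rewrite ln_exp. assert (0 < a / exp a).
  apply Rdiv_lt_0_compat; [lra| apply exp_pos]. lra.
Qed.

Lemma f_cont t : 0 < t -> continuity_pt f t.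
Proof.
  intros. unfold f. apply continuity_pt_plus. apply continuity_pt_minus.
  apply derivable_continuous_pt. exists (/ t). apply derivable_pt_lim_ln; auto.
  apply continuity_pt_const. intros u v; auto.
  unfold Rdiv. apply continuity_pt_mult. apply continuity_pt_const. intros u v; auto.
  apply continuity_pt_inv. apply derivable_continuous_pt, derivable_pt_id. lra.
Qed.

Lemma f_root : exists ts, a < ts /\ f ts = 0 /\
  (forall t, 1 < t -> t < ts -> f t < 0) /\ (forall t, ts < t -> 0 < f t).
Proof.
  assert (a < exp a). { pose proof (exp_ineq1 a ltac:(lra)). lra. }
  destruct (Ranalysis5.IVT_interv f a (exp a)) as [ts [[H1 H2] H3]]; auto.
  intros. apply f_cont. lra. apply fa. apply fea.
  assert (a <> ts). { intro E. subst. pose proof fa. lra. }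
  exists ts. split; [lra|]. split; auto. split.
  - intros t Ht1 Ht2. destruct (Rle_lt_dec t a).
    + pose proof (f_dec 1 t ltac:(lra) Ht1 r). rewrite f1 in H4; auto.
    + pose proof (f_inc t ts ltac:(lra) Ht2). lra.
  - intros t Ht. pose proof (f_inc ts t ltac:(lra) Ht). lra.
Qed.
End F.

Lemma sqrt_exp t : 0 < t -> sqrt t = exp (ln t / 2).
Proof.
  intros. rewrite <- (exp_ln t) at 1 by auto.
  replace (ln t) with (ln t / 2 + ln t / 2) at 1 by field.
  rewrite exp_plus. apply sqrt_square. left; apply exp_pos.
Qed.

Lemma BF_f z k : 0 < k -> BF01 z k = exp (f (z ^ 2) (1 + k) / 2).
Proof.
  intros. unfold BF01. rewrite sqrt_exp by lra. rewrite <- exp_plus. f_equal.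
  unfold f. field. lra.
Qed.

Theorem theorem1 (z : R) (hz : 1 < Rabs z) :
  exists kstar : R,
    (0 < kstar /\ BF01 z kstar = 1 /\
     (forall k : R, 0 < k -> BF01 z k = 1 -> k = kstar)) /\
    (1 + kstar) * ln (1 + kstar) = z ^ 2 * kstar /\
    (forall k : R, 0 < k -> k < kstar -> BF01 z k < 1) /\
    (forall k : R, kstar < k -> BF01 z k > 1).
Proof.
  assert (ha : 1 < z ^ 2).
  { rewrite <- (pow2_abs z). nra. }
  destruct (f_root _ ha) as [ts [H1 [H2 [H3 H4]]]].
  exists (ts - 1).
  assert (Hk : 0 < ts - 1) by lra.
  split; [split; [auto| split]|split; [|split]].
  - rewrite BF_f by auto. replace (1 + (ts - 1)) with ts by ring. rewrite H2.
    replace (0/2) with 0 by field. apply exp_0.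
  - intros k Hk0 E. rewrite BF_f in E by auto.
    destruct (Rtotal_order k (ts - 1)) as [L|[L|L]]; auto.
    + pose proof (H3 (1 + k) ltac:(lra) ltac:(lra)).
      assert (exp (f (z^2) (1+k) / 2) < exp 0) by (apply exp_increasing; lra).
      rewrite exp_0 in H0; lra.
    + pose proof (H4 (1 + k) ltac:(lra)).
      assert (exp 0 < exp (f (z^2) (1+k) / 2)) by (apply exp_increasing; lra).
      rewrite exp_0 in H0; lra.
  - replace (1 + (ts - 1)) with ts by ring. unfold f in H2.
    assert (ln ts = z ^ 2 - z ^ 2 / ts) by lra. rewrite H. field. lra.
  - intros k Hk0 L. rewrite BF_f by auto.
    pose proof (H3 (1 + k) ltac:(lra) ltac:(lra)).
    assert (exp (f (z^2) (1+k) / 2) < exp 0) by (apply exp_increasing; lra).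
    rewrite exp_0 in H0; lra.
  - intros k L. rewrite BF_f by lra.
    pose proof (H4 (1 + k) ltac:(lra)).
    assert (exp 0 < exp (f (z^2) (1+k) / 2)) by (apply exp_increasing; lra).
    rewrite exp_0 in H0; lra.
Qed.
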